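(* For each $j'\in\mathcal C_S$ the ball $B(j')$ is a nonempty subset of $\mathcal N_{j'}$ and $\sum_{i\in B(j')}y^*_i\ge1-\frac1\ell$. Define $(\hat x,\hat y)$ as follows. For $j'\in\mathcal C_D$, $i\in\mathcal N_{j'}$, $j\in\mathcal C$: $\hat y_i=y^*_i$, $\hat x_{ij}=x^*_{ij}$. For $j'\in\mathcal C_S$, let $i(j')$ be a facility of minimum opening cost in $B(j')$; set $\hat y_{i(j')}=1$, $\hat x_{i(j')j}=\phi(j,j')$ for all $j\in\mathcal C$, and $\hat y_i=0$, $\hat x_{ij}=0$ for all $i\in\mathcal N_{j'}\setminus\{i(j')\}$, $j\in\mathcal C$. Then for every $j'\in\mathcal C_S$, exactly one facility of $\mathcal N_{j'}$ is opened (integrally) and $(1-\frac1\ell)\mathcal L\le\sum_{j\in\mathcal C}\hat x_{i(j')j}=d_{j'}\le\mathcal U$; moreover $$\sum_{i\in\mathcal F}\Big(f_i\hat y_i+\sum_{j\in\mathcal C}\hat x_{ij}c(i,j)\Big)\le\sum_{j'\in\mathcal C_S}\Big[\tfrac{\ell}{\ell-1}\sum_{i\in\mathcal N_{j'}}f_iy^*_i+4\sum_{i\in\mathcal N_{j'}}\sum_{j\in\mathcal C}x^*_{ij}\big(c(i,j)+\ell\hat C_j\big)\Big]+\sum_{j'\in\mathcal C_D}\sum_{i\in\mathcal N_{j'}}\Big[f_iy^*_i+\sum_{j\in\mathcal C}x^*_{ij}c(i,j)\Big].$$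
   Context: Fix an LBUBFL instance with uniform bounds: finite client set $\mathcal C$, finite facility set $\mathcal F$, metric $c$ on $\mathcal C\cup\mathcal F$, opening costs $f_i\ge0$, integers $1\le\mathcal L\le\mathcal U$. Its LP relaxation is: minimize $\sum_{i\in\mathcal F}\sum_{j\in\mathcal C}c(i,j)x_{ij}+\sum_{i\in\mathcal F}f_iy_i$ subject to $\sum_{i\in\mathcal F}x_{ij}\ge1$ for all $j\in\mathcal C$; $\mathcal U y_i\ge\sum_{j\in\mathcal C}x_{ij}\ge\mathcal L y_i$ for all $i\in\mathcal F$; $x_{ij}\le y_i$ for all $i,j$; $0\le x_{ij},y_i\le1$. Let $(x^*,y^* )$ be an optimal LP solution. For $j\in\mathcal C$ let $\hat C_j=\sum_{i\in\mathcal F}x^*_{ij}c(i,j)$. Fix a real $\ell\ge2$. For $j\in\mathcal C$ let $B(j)=\{i\in\mathcal F: c(i,j)\le\ell\hat C_j\}$. Sparsification: start with $\bar{\mathcal C}=\mathcal C$ and $\mathcal C'=\emptyset$; while $\bar{\mathcal C}\ne\emptyset$, pick $j'\in\bar{\mathcal C}$ with minimum $\hat C_{j'}$ (ties arbitrary), move $j'$ from $\bar{\mathcal C}$ to $\mathcal C'$, and remove from $\bar{\mathcal C}$ every $j$ with $c(j',j)\le2\ell\hat C_j$. The elements of $\mathcal C'$ are called cluster centers. Each facility $i\in\mathcal F$ is placed in the cluster $\mathcal N_{j'}$ of exactly one center $j'\in\mathcal C'$ minimizing $c(i,j')$. For $j\in\mathcal C$, $j'\in\mathcal C'$ let $\phi(j,j')=\sum_{i\in\mathcal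 N_{j'}}x^*_{ij}$ and $d_{j'}=\sum_{j\in\mathcal C}\phi(j,j')$. A center $j'$ (and its cluster) is sparse if $d_{j'}\le\mathcal U$ and dense otherwise; $\mathcal C_S$ and $\mathcal C_D$ denote the sets of sparse and dense centers. *)

(* Defs.v *)
From HB Require Import structures.
From mathcomp Require Import all_boot all_order all_algebra.
Set Implicit Arguments. Unset Strict Implicit. Unset Printing Implicit Defensive.
Import Order.TTheory GRing.Theory Num.Theory.
Local Open Scope ring_scope.

Section LBUBFL.
Variables (R : realFieldType) (Cl Fa : finType).

Definition is_metric (c : Cl + Fa -> Cl + Fa -> R) : Prop :=
  (forall p q, 0 <= c p q) /\
  (forall p q, c p q = 0 <-> p = q) /\
  (forall p q, c p q = c q p) /\
  (forall p q r, c p r <= c p q + c q r).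

Definition dist (c : Cl + Fa -> Cl + Fa -> R) (i : Fa) (j : Cl) : R :=
  c (inr i) (inl j).
Definition dCC (c : Cl + Fa -> Cl + Fa -> R) (j k : Cl) : R :=
  c (inl j) (inl k).

Definition lp_feasible (L U : nat) (x : Fa -> Cl -> R) (y : Fa -> R) : Prop :=
  (forall j, 1 <= \sum_(i : Fa) x i j) /\
  (forall i, \sum_(j : Cl) x i j <= U%:R * y i) /\
  (forall i, L%:R * y i <= \sum_(j : Cl) x i j) /\
  (forall i j, x i j <= y i) /\
  (forall i j, 0 <= x i j <= 1) /\
  (forall i, 0 <= y i <= 1).

Definition lp_cost (c : Cl + Fa -> Cl + Fa -> R) (f : Fa -> R)
  (x : Fa -> Cl -> R) (y : Fa -> R) : R :=
  \sum_(i : Fa) \sum_(j : Cl) dist c i j * x i j + \sum_(i : Fa) f i * y i.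

Definition lp_optimal c f L U x y : Prop :=
  lp_feasible L U x y /\
  forall x' y', lp_feasible L U x' y' -> lp_cost c f x y <= lp_cost c f x' y'.

Definition Chat c (x : Fa -> Cl -> R) (j : Cl) : R :=
  \sum_(i : Fa) x i j * dist c i j.

Definition ball c x (ell : R) (j : Cl) : {set Fa} :=
  [set i | dist c i j <= ell * Chat c x j].

(* A run of the sparsification loop starting from Cbar, picking the centers
   in the order given by s (ties broken arbitrarily). *)
Fixpoint sparsify_run c x (ell : R) (Cbar : {set Cl}) (s : seq Cl) : Prop :=
  match s with
  | [::] => Cbar = set0
  | j' :: s' =>
      [/\ j' \in Cbar,
          (forall j, j \in Cbar -> Chat c x j' <= Chat c x j) &
          sparsify_run c x ell
            ((Cbar :\ j') :\: [set j | dCC c j' j <= 2 * ell * Chat c x j]) s']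
  end.

(* sigma i is the (unique) center whose cluster contains facility i;
   it is a nearest center (ties arbitrary). *)
Definition cluster_assignment c (Cp : {set Cl}) (sigma : Fa -> Cl) : Prop :=
  forall i, sigma i \in Cp /\
    (forall k, k \in Cp -> dist c i (sigma i) <= dist c i k).

Definition cluster (sigma : Fa -> Cl) (j' : Cl) : {set Fa} :=
  [set i | sigma i == j'].

Definition phi (x : Fa -> Cl -> R) sigma (j j' : Cl) : R :=
  \sum_(i in cluster sigma j') x i j.

Definition dem x sigma (j' : Cl) : R := \sum_(j : Cl) phi x sigma j j'.

Definition sparse_centers (U : nat) x sigma (Cp : {set Cl}) : {set Cl} :=
  [set j' in Cp | dem x sigma j' <= U%:R].
Definition dense_centers (U : nat) x sigma (Cp : {set Cl}) : {set Cl} :=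
  [set j' in Cp | U%:R < dem x sigma j'].

(* (\hat x, \hat y); ic j' is the chosen facility i(j') for sparse j'. *)
Definition yhat (CS : {set Cl}) sigma (ic : Cl -> Fa) (y : Fa -> R) (i : Fa) : R :=
  if sigma i \in CS then (if i == ic (sigma i) then 1 else 0) else y i.
Definition xhat (CS : {set Cl}) sigma (ic : Cl -> Fa) (x : Fa -> Cl -> R)
  (i : Fa) (j : Cl) : R :=
  if sigma i \in CS then (if i == ic (sigma i) then phi x sigma j (sigma i) else 0)
  else x i j.

End LBUBFL.

(* Main.v *)
Require Import Defs.
From HB Require Import structures.
From mathcomp Require Import all_boot all_order all_algebra.
From mathcomp Require Import ring lra.
Import Order.TTheory GRing.Theory Num.Theory.
Set Implicit Arguments. Unset Strict Implicit.
Set Warnings "-notation-overridden,-ambiguous-paths".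
Local Open Scope ring_scope.

Lemma sp_mem (R : realFieldType) (Cl Fa : finType) (c : Cl + Fa -> Cl + Fa -> R)
  (x : Fa -> Cl -> R) (ell : R) (s : seq Cl) :
  forall Cbar, sparsify_run c x ell Cbar s -> forall k, k \in s -> k \in Cbar.
Proof.
elim: s => [|j' s' IH] Cbar //=.
case=> Hin Hmin Hrun k; rewrite inE => /orP[/eqP -> //|ks].
by have := IH _ Hrun k ks; rewrite !inE => /andP[_ /andP[_ ->]].
Qed.

Lemma sp_sep (R : realFieldType) (Cl Fa : finType) (c : Cl + Fa -> Cl + Fa -> R)
  (x : Fa -> Cl -> R) (ell : R) (s : seq Cl) :
  (forall p q, c p q = c q p) -> 0 <= ell ->
  forall Cbar, sparsify_run c x ell Cbar s ->
  forall a b, a \in s -> b \in s -> a != b -> 2 * ell * Chat c x a < dCC c a b.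
Proof.
move=> Hsym hell; elim: s => [|j' s' IH] Cbar //=.
case=> Hin Hmin Hrun a b.
have key : forall b, b \in s' -> 2 * ell * Chat c x j' < dCC c j' b /\
                                 2 * ell * Chat c x b < dCC c j' b.
  move=> b0 b0s; have := sp_mem Hrun b0s; rewrite !inE => /andP[Hn /andP[_ Hb]].
  rewrite -ltNge in Hn; have Hm := Hmin _ Hb.
  have h2 : 0 <= 2 * ell by lra.
  have := ler_wpM2l h2 Hm.
  move=> H1; split => //.
  exact: le_lt_trans H1 Hn.
rewrite !inE => /orP[/eqP ->|as'] /orP[/eqP ->|bs'].
- by rewrite eqxx.
- by move=> _; case: (key _ bs').
- by move=> _; case: (key _ as') => _; rewrite /dCC Hsym.
- exact: IH Hrun a b as' bs'.
Qed.

Lemma sp_cov (R : realFieldType) (Cl Fa : finType) (c : Cl + Fa -> Cl + Fa -> R)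
  (x : Fa -> Cl -> R) (ell : R) (s : seq Cl) :
  (forall p, c p p = 0) -> (forall j, 0 <= 2 * ell * Chat c x j) ->
  forall Cbar, sparsify_run c x ell Cbar s ->
  forall j, j \in Cbar -> exists k, [/\ k \in s, dCC c k j <= 2 * ell * Chat c x j &
                                   Chat c x k <= Chat c x j].
Proof.
move=> H0 Hpos; elim: s => [|j' s' IH] Cbar /=.
  by move=> -> j; rewrite inE.
case=> Hin Hmin Hrun j Hj.
case Hj': (j \in (Cbar :\ j') :\: [set j | dCC c j' j <= 2 * ell * Chat c x j]).
  have [k [ks Hk1 Hk2]] := IH _ Hrun j Hj'.
  by exists k; rewrite inE ks orbT.
exists j'; split; [by rewrite inE eqxx| |exact: Hmin].
case: (eqVneq j j') => [->|ne]; first by rewrite /dCC H0.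
move: Hj'; rewrite !inE Hj ne andbT /=; by case: (_ <= _).
Qed.

Lemma sum_sub (R : numDomainType) (T : finType) (A B : {set T}) (F : T -> R) :
  A \subset B -> (forall i, 0 <= F i) -> \sum_(i in A) F i <= \sum_(i in B) F i.
Proof.
move=> AB F0; rewrite [X in _ <= X](big_setID A) /=.
have -> : B :&: A = A by apply/setIidPr.
by rewrite lerDl sumr_ge0.
Qed.

Lemma ball_mass (R : realFieldType) (Cl Fa : finType) (c : Cl + Fa -> Cl + Fa -> R)
  (x : Fa -> Cl -> R) (ell : R) (j : Cl) :
  (forall i j, 0 <= x i j) -> (forall i j, 0 <= dist c i j) ->
  1 <= \sum_(i : Fa) x i j -> 0 < ell ->
  1 - ell^-1 <= \sum_(i in ball c x ell j) x i j.
Proof.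
move=> x0 d0 hs hell.
set C := Chat c x j.
have C0 : 0 <= C by apply: sumr_ge0 => i _; apply: mulr_ge0.
move: hs; rewrite (bigID (mem (ball c x ell j))) /=.
set Sb := \sum_(i | _) _; set So := \sum_(i | _) _.
have So0 : 0 <= So by apply: sumr_ge0.
suff : So <= ell^-1 by move=> ? ?; lra.
have hC : C = \sum_(i | i \in ball c x ell j) x i j * dist c i j
            + \sum_(i | i \notin ball c x ell j) x i j * dist c i j.
  by rewrite /C /Chat (bigID (mem (ball c x ell j))).
have hout : forall i, i \notin ball c x ell j -> ell * C < dist c i j.
  by move=> i; rewrite inE -ltNge.
have [Cz|Cp] := eqVneq C 0.
  have : \sum_(i : Fa) x i j * dist c i j = 0 by [].
  move/psumr_eq0P => H.
  have -> : So = 0.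
    rewrite /So big1 // => i hi.
    have := H (fun i _ => mulr_ge0 (x0 i j) (d0 i j)) i isT; move/eqP; rewrite mulf_eq0.
    case/orP => /eqP // hd; move: (hout i hi); rewrite Cz mulr0 hd ltxx //.
  by rewrite invr_ge0 ltW.
have Cpos : 0 < C by rewrite lt_def Cp C0.
have h1 : ell * C * So <= C.
  apply: (@le_trans _ _ (\sum_(i | i \notin ball c x ell j) x i j * dist c i j)).
    rewrite /So mulr_sumr; apply: ler_sum => i hi.
    by rewrite mulrC; apply: ler_wpM2l => //; apply: ltW; apply: hout.
  rewrite hC lerDr; apply: sumr_ge0 => i _; exact: mulr_ge0.
have h2 : ell * So <= 1.
  by rewrite -(ler_pM2r Cpos) mul1r; move: h1; rewrite mulrAC.
by rewrite -(ler_pM2l hell) mulfV ?gt_eqF.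
Qed.

Unset Implicit Arguments.
Theorem lemma2p4 (R : realFieldType) (Cl Fa : finType)
  (c : Cl + Fa -> Cl + Fa -> R) (f : Fa -> R) (L U : nat)
  (x : Fa -> Cl -> R) (y : Fa -> R) (ell : R) (s : seq Cl) (sigma : Fa -> Cl) :
  is_metric c ->
  (forall i, 0 <= f i) ->
  (1 <= L)%N -> (L <= U)%N ->
  lp_optimal c f L U x y ->
  2 <= ell ->
  sparsify_run c x ell [set: Cl] s ->
  cluster_assignment c [set j in s] sigma ->
  let CS := sparse_centers U x sigma [set j in s] in
  let CD := dense_centers U x sigma [set j in s] in
  (forall j', j' \in CS ->
     [/\ ball c x ell j' != set0,
         ball c x ell j' \subset cluster sigma j' &
         1 - ell^-1 <= \sum_(i in ball c x ell j') y i]) /\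
  (forall ic : Cl -> Fa,
     (forall j', j' \in CS ->
        ic j' \in ball c x ell j' /\
        (forall i, i \in ball c x ell j' -> f (ic j') <= f i)) ->
     let xh := xhat CS sigma ic x in
     let yh := yhat CS sigma ic y in
     (forall j', j' \in CS ->
        [/\ forall i, i \in cluster sigma j' -> yh i = 0 \/ yh i = 1,
            #|[set i in cluster sigma j' | yh i == 1]| = 1%N,
            (1 - ell^-1) * L%:R <= \sum_(j : Cl) xh (ic j') j,
            \sum_(j : Cl) xh (ic j') j = dem x sigma j' &
            dem x sigma j' <= U%:R]) /\
     \sum_(i : Fa) (f i * yh i + \sum_(j : Cl) xh i j * dist c i j)
     <= \sum_(j' in CS)
          (ell / (ell - 1) * \sum_(i in cluster sigma j') f i * y i
           + 4 * \sum_(i in cluster sigma j') \sum_(j : Cl)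
                   x i j * (dist c i j + ell * Chat c x j))
        + \sum_(j' in CD) \sum_(i in cluster sigma j')
            (f i * y i + \sum_(j : Cl) x i j * dist c i j)).
Proof.
move=> [Hc0 [Hceq [Hsym Htri]]] f0 L1 LU [[Hsum [HU [HL [Hxy [Hx01 Hy01]]]]] _] hell Hrun Hclus CS CD.
have x0 : forall i j, 0 <= x i j by move=> i j; case/andP: (Hx01 i j).
have y0 : forall i, 0 <= y i by move=> i; case/andP: (Hy01 i).
have d0 : forall i j, 0 <= dist c i j by move=> i j; apply: Hc0.
have C0 : forall j, 0 <= Chat c x j.
  by move=> j; apply: sumr_ge0 => i _; apply: mulr_ge0.
have ell0 : 0 < ell by lra.
have sep : forall a b, a \in [set j in s] -> b \in [set j in s] -> a != b ->
           2 * ell * Chat c x a < dCC c a b.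
  move=> a b; rewrite !inE; exact: (sp_sep Hsym (ltW ell0) Hrun).
have cov : forall j, exists k, [/\ k \in [set j in s], dCC c k j <= 2 * ell * Chat c x j &
                                   Chat c x k <= Chat c x j].
  move=> j.
  have H0 : forall p, c p p = 0 by move=> p; apply/Hceq.
  have Hp : forall j, 0 <= 2 * ell * Chat c x j.
    by move=> j0; apply: mulr_ge0 => //; apply: mulr_ge0 => //; lra.
  have [k [ks h1 h2]] := sp_cov H0 Hp Hrun (in_setT j).
  by exists k; rewrite inE.
have Hsub : forall j' i, j' \in [set j in s] -> i \in ball c x ell j' -> sigma i = j'.
  move=> j' i Hj' Hi.
  have [Hs Hmin] := Hclus i.
  case: (eqVneq (sigma i) j') => // ne; exfalso.
  have h1 := sep j' (sigma i) Hj' Hs (negbT (introF eqP (fun e => (elimN eqP ne) (esym e)))).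
  have h2 : dCC c j' (sigma i) <= dist c i j' + dist c i (sigma i).
    by rewrite /dCC /dist (Hsym (inr i) (inl j')); apply: Htri.
  have h3 := Hmin j' Hj'.
  move: Hi; rewrite inE => h4.
  lra.
have CSe : forall j', (j' \in CS) = (j' \in [set j in s]) && (dem x sigma j' <= U%:R).
  by move=> j'; rewrite /CS /sparse_centers inE.
have CDe : forall j', (j' \in CD) = (j' \in [set j in s]) && (U%:R < dem x sigma j').
  by move=> j'; rewrite /CD /dense_centers inE.
have mass : forall j', 1 - ell^-1 <= \sum_(i in ball c x ell j') y i.
  move=> j'; apply: le_trans (ball_mass (ell:=ell) x0 d0 (Hsum j') ell0) _.
  by apply: ler_sum => i _; apply: Hxy.
have mass_pos : 0 < 1 - ell^-1.
  have : ell^-1 < 1 by rewrite invf_lt1 //; lra.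
  lra.
split.
  move=> j' Hj'; have Hj's : j' \in [set j in s] by move: Hj'; rewrite CSe => /andP[].
  split.
  - apply/negP => /eqP e; have := mass j'; rewrite e big_set0; lra.
  - by apply/subsetP => i hi; rewrite inE (Hsub j' i Hj's hi).
  - exact: mass.
move=> ic Hic xh yh.
have CSS : forall j', j' \in CS -> j' \in [set j in s].
  by move=> j'; rewrite CSe => /andP[].
have sic : forall j', j' \in CS -> sigma (ic j') = j'.
  by move=> j' H; apply: Hsub (CSS _ H) (Hic j' H).1.
have ballsub : forall j', j' \in [set j in s] -> ball c x ell j' \subset cluster sigma j'.
  by move=> j' Hj'; apply/subsetP => i hi; rewrite inE (Hsub j' i Hj' hi).
have lower : forall j', j' \in [set j in s] -> (1 - ell^-1) * L%:R <= dem x sigma j'.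
  move=> j' Hj'; rewrite /dem /phi exchange_big /=.
  apply: (@le_trans _ _ (L%:R * \sum_(i in ball c x ell j') y i)).
    by rewrite [X in X <= _]mulrC; apply: ler_wpM2l => //; apply: mass.
  rewrite mulr_sumr.
  apply: le_trans (sum_sub (F := fun i => L%:R * y i) (ballsub _ Hj') _) _.
    by move=> i; apply: mulr_ge0.
  by apply: ler_sum => i _; apply: HL.
have key : forall j' i j, j' \in CS -> sigma i = j' ->
    dist c (ic j') j <= 4 * (dist c i j + ell * Chat c x j).
  move=> j' i j H si.
  have Hs := CSS _ H.
  have [k [ks hk1 hk2]] := cov j.
  have [_ Hmin] := Hclus i; rewrite si in Hmin.
  have h1 := Hmin k ks.
  have h2 : dist c i k <= dist c i j + dCC c k j.
    by rewrite /dist /dCC (Hsym (inl k)); apply: Htri.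
  have eC : 0 <= ell * Chat c x j by apply: mulr_ge0 => //; apply: ltW.
  have dij := d0 i j.
  have h3 : ell * Chat c x j' <= dist c i j + 2 * ell * Chat c x j.
    case: (eqVneq k j') => [e|ne].
      rewrite -e; have : ell * Chat c x k <= ell * Chat c x j.
        by apply: ler_wpM2l => //; apply: ltW.
      lra.
    have h6 := sep j' k Hs ks (negbT (introF eqP (fun e => (elimN eqP ne) (esym e)))).
    have h7 : dCC c j' k <= dist c i j' + dist c i k.
      by rewrite /dCC /dist (Hsym (inr i) (inl j')); apply: Htri.
    lra.
  have h4 : dist c (ic j') j <= dist c (ic j') j' + dist c i j' + dist c i j.
    rewrite /dist; apply: le_trans (Htri _ (inl j') _) _.
    rewrite -addrA lerD2l (Hsym (inr i) (inl j')); apply: Htri.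
  have h5 : dist c (ic j') j' <= ell * Chat c x j'.
    by have := (Hic j' H).1; rewrite inE.
  lra.
split.
  move=> j' H; have Hs := CSS _ H; have sj := sic j' H.
  have exh : \sum_(j : Cl) xh (ic j') j = dem x sigma j'.
    by apply: eq_bigr => j _; rewrite /xh /xhat sj H eqxx.
  split.
  - move=> i; rewrite inE => /eqP si; rewrite /yh /yhat si H.
    by case: (_ == _); [right|left].
  - have E : [set i in cluster sigma j' | yh i == 1] = [set ic j'].
      apply/setP => i; rewrite !inE /yh /yhat.
      case: (eqVneq (sigma i) j') => [si|ne] /=.
        by rewrite si H; case: (i == ic j'); rewrite ?eqxx // eq_sym oner_eq0.
      by apply/esym/eqP => e; rewrite e sj eqxx in ne.
    by rewrite E cards1.
  - by rewrite exh; apply: lower.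
  - exact: exh.
  - by move: H; rewrite CSe => /andP[].
rewrite (partition_big sigma (mem [set j in s])) /=; last by move=> i _; exact: (Hclus i).1.
rewrite (bigID (fun j => dem x sigma j <= U%:R)) /=.
apply: lerD.
  rewrite [X in _ <= X](eq_bigl (fun j => (j \in [set j in s]) && (dem x sigma j <= U%:R))); last first.
    by move=> j; rewrite CSe.
  apply: ler_sum => j' /andP[Hs Hd].
  have H : j' \in CS by rewrite CSe Hs Hd.
  have sj := sic j' H.
  rewrite (eq_bigl (fun i => i \in cluster sigma j')); last by move=> i; rewrite inE.
  rewrite (bigD1 (ic j')) /=; last by rewrite inE sj.
  rewrite [\sum_(i | _ && _) _]big1 ?addr0; last first.
    move=> i /andP[hi ne]; move: hi; rewrite inE => /eqP si.
    rewrite /yh /yhat /xh /xhat si H (negbTE ne) mulr0 big1 ?addr0 // => j _.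
    by rewrite mul0r.
  rewrite /yh /yhat /xh /xhat sj H eqxx mulr1.
  apply: lerD.
    have hA : (1 - ell^-1) * f (ic j') <= \sum_(i in cluster sigma j') f i * y i.
      apply: le_trans (ler_wpM2r (f0 (ic j')) (mass j')) _.
      rewrite mulr_suml.
      apply: (@le_trans _ _ (\sum_(i in ball c x ell j') f i * y i)).
        apply: ler_sum => i hi; rewrite mulrC; apply: ler_wpM2r => //.
        exact: (Hic j' H).2.
      apply: sum_sub; first exact: ballsub.
      by move=> i; apply: mulr_ge0.
    have e : f (ic j') = ell / (ell - 1) * ((1 - ell^-1) * f (ic j')).
      field; apply/andP; split; apply/eqP; lra.
    rewrite {1}e; apply: ler_wpM2l => //.
    apply: divr_ge0; lra.
  rewrite /phi.
  under eq_bigr => j _ do rewrite mulr_suml.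
  rewrite exchange_big /= mulr_sumr.
  apply: ler_sum => i; rewrite inE => /eqP si.
  rewrite mulr_sumr; apply: ler_sum => j _.
  by rewrite mulrCA; apply: ler_wpM2l => //; apply: key.
rewrite [X in _ <= X](eq_bigl (fun j => (j \in [set j in s]) && ~~ (dem x sigma j <= U%:R))); last first.
  by move=> j; rewrite CDe ltNge.
apply: ler_sum => j' /andP[Hs Hd].
have nH : j' \notin CS by rewrite CSe Hs (negbTE Hd).
rewrite (eq_bigl (fun i => i \in cluster sigma j')); last by move=> i; rewrite inE.
apply: ler_sum => i; rewrite inE => /eqP si.
by rewrite /yh /yhat /xh /xhat si (negbTE nH).
Qed.
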